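(* Let $n=2$, let $\mathcal{D}$ be the set of strictly positive piecewise-constant functions $[0,1]\to\mathbb{R}_{>0}$, and let $\mathcal{M}$ be a truthful proportional mechanism on $\mathcal{D}\times\mathcal{D}$. Let $X_1=\mathcal{M}_1(F^1)$, $X_2=\mathcal{M}_2(F^1)$ where $F^1$ is the profile of two constant-$1$ densities (assume $X_1,X_2$ are finite unions of intervals). Fix $\varepsilon\in(0,\frac12)$ and let $F^3=(f_1^3,f_2^3)$ where $f_1^3=\frac12$ on $X_1$ and $1$ on $X_2$, and $f_2^3=\varepsilon$ on $X_1$ and $1$ on $X_2$. Then $$|\mathcal{M}_1(F^3)\cap X_1|=|\mathcal{M}_1(F^3)\cap X_2|=|\mathcal{M}_2(F^3)\cap X_1|=|\mathcal{M}_2(F^3)\cap X_2|=\tfrac14.$$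
   Context: Agent $i$'s utility for a measurable $X\subseteq[0,1]$ is $v_i(X)=\int_X f_i$; $|X|$ denotes Lebesgue measure. An allocation is a pair of disjoint measurable subsets of $[0,1]$ (not necessarily covering $[0,1]$); $\mathcal{M}_i(F)$ is agent $i$'s piece. Proportional: $v_i(\mathcal{M}_i(F))\ge\frac12 v_i([0,1])$ for each $i$ w.r.t. the reported densities. Truthful: for each agent $i$, any profile and any alternative report $f_i'$ in the domain, agent $i$'s utility (w.r.t. the true $f_i$) from the truthful report is at least that from reporting $f_i'$, the other agent's report held fixed. *)

(* Defs.v *)
From HB Require Import structures.
From mathcomp Require Import all_boot all_order all_algebra.
From mathcomp Require Import all_classical all_reals all_analysis.
Set Implicit Arguments. Unset Strict Implicit. Unset Printing Implicit Defensive.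
Import Order.TTheory GRing.Theory Num.Theory.
Import numFieldNormedType.Exports.
Local Open Scope classical_set_scope.
Local Open Scope ring_scope.

Section Defs.
Variable R : realType.

Definition unit01 : set R := [set x | 0 <= x <= 1].

Definition piecewise_const_pos (f : R -> R) : Prop :=
  (forall x, ~ unit01 x -> f x = 0) /\
  (forall x, unit01 x -> 0 < f x) /\
  exists s : seq R, forall x y, unit01 x -> unit01 y ->
     (forall b, b \in s -> ~ (Num.min x y <= b <= Num.max x y)) -> f x = f y.

Definition dens1 (x : R) : R := if (0 <= x <= 1) then 1 else 0.

Definition util (f : R -> R) (X : set R) : \bar R :=
  (\int[@lebesgue_measure R]_(x in X) (f x)%:E)%E.

Definition allocation (A : set R * set R) : Prop :=
  measurable A.1 /\ measurable A.2 /\ A.1 `<=` unit01 /\ A.2 `<=` unit01 /\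
  A.1 `&` A.2 = set0.

Definition mechanism (M : (R -> R) -> (R -> R) -> set R * set R) : Prop :=
  forall f1 f2, piecewise_const_pos f1 -> piecewise_const_pos f2 ->
    allocation (M f1 f2).

Definition proportional (M : (R -> R) -> (R -> R) -> set R * set R) : Prop :=
  forall f1 f2, piecewise_const_pos f1 -> piecewise_const_pos f2 ->
    ((2^-1)%:E * util f1 unit01 <= util f1 (M f1 f2).1)%E /\
    ((2^-1)%:E * util f2 unit01 <= util f2 (M f1 f2).2)%E.

Definition truthful (M : (R -> R) -> (R -> R) -> set R * set R) : Prop :=
  (forall f1 f2 f1', piecewise_const_pos f1 -> piecewise_const_pos f2 ->
     piecewise_const_pos f1' ->
     (util f1 (M f1' f2).1 <= util f1 (M f1 f2).1)%E) /\
  (forall f1 f2 f2', piecewise_const_pos f1 -> piecewise_const_pos f2 ->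
     piecewise_const_pos f2' ->
     (util f2 (M f1 f2').2 <= util f2 (M f1 f2).2)%E).

Definition fin_union_intervals (X : set R) : Prop :=
  exists s : seq (interval R), X = \big[setU/set0]_(i <- s) [set` i].

End Defs.

(* Main.v *)
Require Import Defs.
From HB Require Import structures.
From mathcomp Require Import all_boot all_order all_algebra.
From mathcomp Require Import all_classical all_reals all_analysis.
From mathcomp Require Import lra measurable_realfun.
Import Order.TTheory GRing.Theory Num.Theory.
Import numFieldNormedType.Exports.
Local Open Scope classical_set_scope.
Local Open Scope ring_scope.
Section Helpers.
Variable R : realType.

Lemma sep_seq (s : seq R) (x : R) : x \notin s ->
  exists2 d : R, 0 < d & forall b, b \in s -> d <= `|x - b|.
Proof.
elim: s => [|b s IH]; first by move=> _; exists 1 => // b; rewrite in_nil.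
rewrite in_cons negb_or => /andP[xb /IH[d d0 Hd]].
exists (Num.min d `|x - b|).
  by rewrite lt_min d0 normr_gt0 subr_eq0.
move=> c; rewrite in_cons => /orP[/eqP->|cs]; first by rewrite ge_min lexx orbT.
by rewrite ge_min Hd.
Qed.

Lemma cnt_meas (A : set R) : countable A -> measurable A.
Proof. by move=> cA; apply: countable_measurable => // t; exact: measurable_set1. Qed.

Lemma pc_measurable (f : R -> R) : piecewise_const_pos f ->
  measurable_fun (unit01 (R:=R)) f.
Proof.
move=> [_ [_ [s Hs]]].
pose s' := 0 :: 1 :: s.
have Hs' : forall x y, unit01 x -> unit01 y ->
    (forall b, b \in s' -> ~ (Num.min x y <= b <= Num.max x y)) -> f x = f y.
  move=> x y ux uy H; apply: Hs => // b bs; apply: H.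
  by rewrite !in_cons bs !orbT.
move=> _ B mB.
have m2 : measurable [set x : R | x \in s' /\ @unit01 R x /\ B (f x)].
  apply: cnt_meas; apply: finite_set_countable.
  by apply: (@sub_finite_set _ _ [set` s']) => // x [].
have m1 : measurable [set x : R | (0 < x < 1) /\ x \notin s' /\ B (f x)].
  apply: measurable_realfun.open_measurable; rewrite openE => x [/andP[x0 x1] [xs Bx]].
  rewrite /interior; apply/nbhs_ballP.
  have [d d0 Hd] := sep_seq _ _ xs.
  exists d => // y; rewrite -ball_normE /ball_ /= => xyd.
  have nb : forall b, b \in s' -> ~ (Num.min x y <= b <= Num.max x y).
    move=> b bs /andP[h1 h2]; have := Hd b bs; apply/negP; rewrite -ltNge ltr_norml.
    move: xyd; rewrite ltr_norml => /andP[? ?].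
    case: (lerP x y) => xy.
    - move: h1 h2; rewrite (min_l xy) (max_r xy) => ? ?; apply/andP; split; lra.
    - move: h1 h2; rewrite (min_r (ltW xy)) (max_l (ltW xy)) => ? ?; apply/andP; split; lra.
  have y0 : 0 < y.
    case: (ltP 0 y) => // y0; exfalso; apply: (nb 0); first by rewrite in_cons eqxx.
    have yx : y <= x by lra.
    by rewrite (min_r yx) (max_l yx) y0 ltW.
  have y1 : y < 1.
    case: (ltP y 1) => // y1; exfalso; apply: (nb 1); first by rewrite !in_cons eqxx orbT.
    have xy : x <= y by lra.
    by rewrite (min_l xy) (max_r xy) y1 ltW.
  have ys : y \notin s'.
    apply/negP => ys; apply: (nb y ys).
    by rewrite ge_min le_max !lexx !orbT.
  split; first by rewrite y0 y1.
  split => //.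
  rewrite -(Hs' x y) //; first by rewrite /unit01 /= !ltW.
  by rewrite /unit01 /= !ltW.
rewrite (_ : @unit01 R `&` f @^-1` B = [set x | (0 < x < 1) /\ x \notin s' /\ B (f x)]
   `|` [set x | x \in s' /\ @unit01 R x /\ B (f x)]).
  exact: measurableU.
apply/seteqP; split=> x /=.
  move=> [ux Bx]; case: (boolP (x \in s')) => xs; [right | left] => //.
  split => //.
  move: (xs); rewrite !in_cons !negb_or => /andP[x0 /andP[x1 _]].
  move: ux; rewrite /unit01 /= => /andP[a b].
  by rewrite !lt_neqAle a b eq_sym x0 x1.
case=> [[/andP[a b] [_ Bx]] | [_ [ux Bx]]]; split => //.
by rewrite /unit01 /= !ltW.
Qed.


Local Notation mu := (@lebesgue_measure R).

Lemma sub0 (A B : set R) : measurable A -> measurable B -> A `<=` B ->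
  mu B = 0%E -> mu A = 0%E.
Proof. by move=> mA mB AB B0; apply/eqP; rewrite -measure_le0 -B0 le_measure ?inE. Qed.

Lemma unit01E : @unit01 R = `[0, 1]%classic.
Proof. by apply/seteqP; split => x; rewrite /unit01 /= in_itv. Qed.

Lemma m01 : measurable (@unit01 R).
Proof. by rewrite unit01E; exact: measurable_itv. Qed.

Lemma decomp (X1 X2 A : set R) (f : R -> R) (k1 k2 : R) :
  measurable X1 -> measurable X2 -> measurable A -> A `<=` unit01 (R:=R) ->
  mu (unit01 (R:=R) `\` (X1 `|` X2)) = 0%E ->
  measurable_fun (unit01 (R:=R)) f -> (forall x, unit01 (R:=R) x -> 0 <= f x) ->
  (forall x, X1 x -> f x = k1) -> (forall x, X2 x -> f x = k2) ->
  X1 `&` X2 = set0 ->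
  util f A = (k1%:E * mu (A `&` X1) + k2%:E * mu (A `&` X2))%E.
Proof.
move=> mX1 mX2 mA A01 N0 mf f0 fk1 fk2 X12.
set N := unit01 (R:=R) `\` (X1 `|` X2).
have mN : measurable N by apply: measurableD; [exact: m01 | exact: measurableU].
have mfE : measurable_fun A (EFin \o f).
  by apply/measurable_EFinP; apply: measurable_funS mf => //; exact: m01.
have eA : A = (A `&` X1) `|` ((A `&` X2) `|` (A `&` N)).
  apply/seteqP; split => x /=.
    move=> Ax; case: (pselect (X1 x)) => ?; first by left.
    case: (pselect (X2 x)) => ?; first by right; left.
    by right; right; split => //; split; [exact: A01 | case].
  by case=> [[]|[[]|[]]].
have mA1 : measurable (A `&` X1) by exact: measurableI.
have mA2 : measurable (A `&` X2) by exact: measurableI.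
have mAN : measurable (A `&` N) by exact: measurableI.
have d1 : [disjoint A `&` X1 & (A `&` X2 `|` A `&` N)].
  apply/disj_set2P; apply/seteqP; split => x //= [[Ax X1x] [[_ X2x]|[_ [_ NX]]]].
    by have : (X1 `&` X2) x by []; rewrite X12.
  by apply: NX; left.
have d2 : [disjoint A `&` X2 & A `&` N].
  apply/disj_set2P; apply/seteqP; split => x //= [[Ax X2x] [_ [_ NX]]].
  by apply: NX; right.
have f0' : forall x, A x -> (0 <= (EFin \o f) x)%E.
  by move=> x /A01 ux; rewrite lee_fin; exact: f0.
have mU : measurable (A `&` X2 `|` A `&` N) by exact: measurableU.
rewrite /util {1}eA ge0_integral_setU //; first last.
  by move=> x; rewrite -eA; exact: f0'.
  by rewrite -eA.
rewrite ge0_integral_setU //; first last.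
  by move=> x [[Ax _]|[Ax _]]; exact: f0'.
  by apply: measurable_funS mfE => // x [[]|[]].
rewrite (@null_set_integral _ _ _ mu (A `&` N)); first last.
- by apply: (sub0 _ _ mAN mN) N0 => x [].
- by apply: measurable_funS mfE => // x [].
- exact: measurableI.
rewrite adde0.
rewrite (eq_integral (fun=> k1%:E)); last by move=> x; rewrite inE => -[_ X1x] /=; rewrite fk1.
rewrite [X in (_ + X)%E](eq_integral (fun=> k2%:E)); last by move=> x; rewrite inE => -[_ X2x] /=; rewrite fk2.
by rewrite integral_cst // integral_cst.
Qed.

Lemma util_cst (f : R -> R) (k : R) (A : set R) : measurable A ->
  (forall x, A x -> f x = k) -> util f A = (k%:E * mu A)%E.
Proof.
move=> mA H; rewrite /util (eq_integral (fun=> k%:E)) ?integral_cst // => x.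
by rewrite inE => Ax; rewrite /= H.
Qed.

Lemma mu01 : mu (@unit01 R) = 1%:E.
Proof. by rewrite unit01E lebesgue_measure_itv /= lte_fin ltr01 -EFinD subr0. Qed.

Lemma fin01 (A : set R) : measurable A -> A `<=` unit01 (R:=R) ->
  exists r : R, mu A = r%:E /\ 0 <= r.
Proof.
move=> mA A01.
have h1 : (mu A <= 1%:E)%E by rewrite -mu01 le_measure ?inE //; exact: m01.
have h0 : (0 <= mu A)%E := measure_ge0 _ _.
move: h0 h1; case: (mu A) => [r| |] //= h0 _.
by exists r; split => //; rewrite -lee_fin.
Qed.

Lemma add_le (P Q S : set R) : measurable P -> measurable Q -> measurable S ->
  P `&` Q = set0 -> P `|` Q `<=` S -> (mu P + mu Q <= mu S)%E.
Proof.
move=> mP mQ mS PQ sub; rewrite -measureU // le_measure ?inE //.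
exact: measurableU.
Qed.

Lemma pc_dens1 : piecewise_const_pos (@dens1 R).
Proof.
split; first by move=> x; rewrite /dens1 /unit01 /=; case: ifP.
split; first by move=> x; rewrite /dens1 /unit01 /= => ->.
by exists [::] => x y; rewrite /dens1 /unit01 /= => -> ->.
Qed.

Lemma null_rest (X1 X2 : set R) : measurable X1 -> measurable X2 ->
  X1 `<=` unit01 (R:=R) -> X2 `<=` unit01 (R:=R) -> X1 `&` X2 = set0 ->
  mu X1 = (2^-1)%:E -> mu X2 = (2^-1)%:E ->
  mu (unit01 (R:=R) `\` (X1 `|` X2)) = 0%E.
Proof.
move=> mX1 mX2 X1u X2u X12 e1 e2.
have mB : measurable (X1 `|` X2) by exact: measurableU.
have hU : mu (X1 `|` X2) = (mu X1 + mu X2)%E by apply: measureU.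
have hD : mu (unit01 (R:=R) `\` (X1 `|` X2)) =
   (mu (unit01 (R:=R)) - mu (unit01 (R:=R) `&` (X1 `|` X2)))%E.
  have h01 : (mu (unit01 (R:=R)) < +oo)%E by rewrite mu01 ltry.
  by apply: measureD => //; exact: m01.
rewrite hD setIidr; last by move=> x [/X1u|/X2u].
rewrite hU e1 e2 mu01.
have -> : ((2^-1)%:E + (2^-1)%:E = 1%:E :> \bar R)%E.
  by rewrite -EFinD; congr EFin; lra.
by rewrite subee.
Qed.

Lemma disjI (A B C D : set R) : A `&` B = set0 -> (A `&` C) `&` (B `&` D) = set0.
Proof.
move=> AB; apply/seteqP; split => x // [[h1 _] [h2 _]].
by have : (A `&` B) x by []; rewrite AB.
Qed.

End Helpers.

Theorem proposition3 (R : realType)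
  (M : (R -> R) -> (R -> R) -> set R * set R)
  (HM : mechanism M) (Hprop : proportional M) (Htruth : truthful M)
  (X1 X2 : set R)
  (HX1 : X1 = (M (@dens1 R) (@dens1 R)).1)
  (HX2 : X2 = (M (@dens1 R) (@dens1 R)).2)
  (HX1fin : fin_union_intervals X1) (HX2fin : fin_union_intervals X2)
  (eps : R) (Heps0 : 0 < eps) (Heps1 : eps < 2^-1)
  (f13 f23 : R -> R)
  (Hf13 : piecewise_const_pos f13) (Hf23 : piecewise_const_pos f23)
  (Hf13X1 : forall x, X1 x -> f13 x = 2^-1) (Hf13X2 : forall x, X2 x -> f13 x = 1)
  (Hf23X1 : forall x, X1 x -> f23 x = eps) (Hf23X2 : forall x, X2 x -> f23 x = 1) :
  @lebesgue_measure R ((M f13 f23).1 `&` X1) = (4^-1)%:E /\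
  @lebesgue_measure R ((M f13 f23).1 `&` X2) = (4^-1)%:E /\
  @lebesgue_measure R ((M f13 f23).2 `&` X1) = (4^-1)%:E /\
  @lebesgue_measure R ((M f13 f23).2 `&` X2) = (4^-1)%:E.
Proof.
have pd := @pc_dens1 R.
have [mX1 [mX2 [X1u [X2u X12]]]] := HM _ _ pd pd.
rewrite -HX1 -HX2 in mX1 mX2 X1u X2u X12.
set A1 := (M f13 f23).1; set A2 := (M f13 f23).2.
set G1 := (M (@dens1 R) f23).1; set G2 := (M (@dens1 R) f23).2.
have [mA1 [mA2 [A1u [A2u A12]]]] := HM _ _ Hf13 Hf23.
have [mG1 [mG2 [G1u [G2u G12]]]] := HM _ _ pd Hf23.
have ud : forall A, measurable A -> A `<=` unit01 (R:=R) -> util (@dens1 R) A = @lebesgue_measure R A.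
  move=> A mA Au; rewrite (util_cst _ _ 1) ?mul1e // => x /Au.
  by rewrite /dens1 /unit01 /= => ->.
have [x1 [ex1 x10]] := fin01 _ _ mX1 X1u.
have [x2 [ex2 x20]] := fin01 _ _ mX2 X2u.
have [Hp1 Hp2] := Hprop _ _ pd pd.
rewrite -HX1 -HX2 in Hp1 Hp2.
rewrite !ud // in Hp1 Hp2; try exact: (m01 R).
have e01 : @lebesgue_measure R (unit01 (R:=R)) = 1%:E by exact: mu01.
rewrite e01 in Hp1 Hp2.
rewrite ex1 -EFinM lee_fin mulr1 in Hp1.
rewrite ex2 -EFinM lee_fin mulr1 in Hp2.
have hsum : x1 + x2 <= 1.
  have := @add_le R X1 X2 (unit01 (R:=R)) mX1 mX2 (m01 R) X12.
  rewrite ex1 ex2 (mu01 R) -EFinD lee_fin; apply.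
  by move=> x [/X1u|/X2u].
have ex1' : x1 = 2^-1 by lra.
have ex2' : x2 = 2^-1 by lra.
have N0 : @lebesgue_measure R (unit01 (R:=R) `\` (X1 `|` X2)) = 0%E.
  by apply: null_rest => //; [rewrite ex1 ex1' | rewrite ex2 ex2'].
have [_ [pos13 _]] := Hf13.
have [_ [pos23 _]] := Hf23.
have d13 : forall A, measurable A -> A `<=` unit01 (R:=R) -> util f13 A =
   ((2^-1)%:E * @lebesgue_measure R (A `&` X1) + 1%:E * @lebesgue_measure R (A `&` X2))%E.
  move=> A mA Au; apply: decomp => //; first exact: pc_measurable.
  by move=> x /pos13/ltW.
have d23 : forall A, measurable A -> A `<=` unit01 (R:=R) -> util f23 A =
   (eps%:E * @lebesgue_measure R (A `&` X1) + 1%:E * @lebesgue_measure R (A `&` X2))%E.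
  move=> A mA Au; apply: decomp => //; first exact: pc_measurable.
  by move=> x /pos23/ltW.
have fr : forall A, measurable A -> A `<=` unit01 (R:=R) ->
   exists r : R, @lebesgue_measure R A = r%:E /\ 0 <= r := @fin01 R.
have [a [ea a0]] := fr (A1 `&` X1) (measurableI _ _ mA1 mX1) (fun x h => A1u x h.1).
have [b [eb b0]] := fr (A1 `&` X2) (measurableI _ _ mA1 mX2) (fun x h => A1u x h.1).
have [c [ec c0]] := fr (A2 `&` X1) (measurableI _ _ mA2 mX1) (fun x h => A2u x h.1).
have [d [ed d0]] := fr (A2 `&` X2) (measurableI _ _ mA2 mX2) (fun x h => A2u x h.1).
have [cp [ecp cp0]] := fr (G2 `&` X1) (measurableI _ _ mG2 mX1) (fun x h => G2u x h.1).
have [dp [edp dp0]] := fr (G2 `&` X2) (measurableI _ _ mG2 mX2) (fun x h => G2u x h.1).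
have [g1 [eg1 g10]] := fr G1 mG1 G1u.
have [g2 [eg2 g20]] := fr G2 mG2 G2u.
have [ma [ema ma0]] := fr A1 mA1 A1u.
have i1 : a + c <= x1.
  have := @add_le R _ _ X1 (measurableI _ _ mA1 mX1) (measurableI _ _ mA2 mX1) mX1 (disjI _ _ _ _ _ A12).
  rewrite ea ec ex1 -EFinD lee_fin; apply; by move=> x [[]|[]].
have i2 : b + d <= x2.
  have := @add_le R _ _ X2 (measurableI _ _ mA1 mX2) (measurableI _ _ mA2 mX2) mX2 (disjI _ _ _ _ _ A12).
  rewrite eb ed ex2 -EFinD lee_fin; apply; by move=> x [[]|[]].
have i3 : cp + dp <= g2.
  have dj : (G2 `&` X1) `&` (G2 `&` X2) = set0.
    apply/seteqP; split=> x // [[_ h1] [_ h2]].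
    by have : (X1 `&` X2) x by []; rewrite X12.
  have := @add_le R _ _ G2 (measurableI _ _ mG2 mX1) (measurableI _ _ mG2 mX2) mG2 dj.
  rewrite ecp edp eg2 -EFinD lee_fin; apply; by move=> x [[]|[]].
have i4 : g1 + g2 <= 1.
  have := @add_le R _ _ (unit01 (R:=R)) mG1 mG2 (m01 R) G12.
  rewrite eg1 eg2 (mu01 R) -EFinD lee_fin; apply; by move=> x [/G1u|/G2u].
have i5 : a + b <= ma.
  have dj : (A1 `&` X1) `&` (A1 `&` X2) = set0.
    apply/seteqP; split=> x // [[_ h1] [_ h2]].
    by have : (X1 `&` X2) x by []; rewrite X12.
  have := @add_le R _ _ A1 (measurableI _ _ mA1 mX1) (measurableI _ _ mA1 mX2) mA1 dj.
  rewrite ea eb ema -EFinD lee_fin; apply; by move=> x [[]|[]].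
have [T1 T2] := Htruth.
have t1 := T1 _ _ _ pd Hf23 Hf13.
rewrite !ud // in t1.
rewrite ema eg1 lee_fin in t1.
have t2 := T2 _ _ _ pd Hf23 pd.
rewrite -HX2 (util_cst _ f23 1 X2) // in t2.
rewrite -/G2 d23 // in t2.
rewrite ecp edp ex2 -!EFinM -EFinD lee_fin in t2.
have [P1 P2] := Hprop _ _ Hf13 Hf23.
rewrite -/A1 -/A2 in P1 P2.
rewrite !d13 // in P1; try exact: (m01 R).
rewrite !d23 // in P2; try exact: (m01 R).
rewrite (setIidr X1u) (setIidr X2u) in P1 P2.
rewrite ea eb ex1 ex2 !mul1e -?EFinM -?EFinD -?EFinM lee_fin in P1.
rewrite ec ed ex1 ex2 !mul1e -?EFinM -?EFinD -?EFinM lee_fin in P2.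
rewrite mul1r in t2.
rewrite ex1' ex2' in P1 P2 t2 i1 i2.
have ecp' : eps * cp <= cp.
  by rewrite -[leRHS]mul1r ler_wpM2r //; lra.
have hg2 : 2^-1 <= g2 by lra.
have hab : a + b <= 2^-1 by lra.
have hc : 0 <= eps * (2^-1 - a - c) by apply: mulr_ge0; lra.
have hprod : 0 <= (2^-1 - eps) * (a - 4^-1) by lra.
have ha1 : 4^-1 <= a.
  by move: hprod; rewrite pmulr_rge0 ?subr_gt0 // subr_ge0.
have ea' : a = 4^-1 by lra.
have eb' : b = 4^-1 by lra.
have hc1 : c <= 4^-1 by lra.
have hd1 : d <= 4^-1 by lra.
have : eps * c <= eps * 4^-1 by rewrite ler_pM2l.
move=> hec.
have ed' : d = 4^-1 by lra.
have hc2 : eps * 4^-1 <= eps * c by lra.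
have ec' : c = 4^-1.
  by apply/le_anti; rewrite hc1 -(ler_pM2l Heps0) hc2.
by rewrite ea eb ec ed ea' eb' ec' ed'.

Qed.
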